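(* Let $A$ be a self-adjoint operator on a complex separable Hilbert space $\mathbb{H}$, and let $G$ be a metric operator associated with $A$, i.e. $G$ is a metric operator such that $G^{1/2}AG^{-1/2}$ is self-adjoint. Then for every nonzero $\psi\in\mathbb{H}$, $$\langle A\rangle_{\psi,G}:=\frac{\langle\psi,G^{1/2}AG^{-1/2}\psi\rangle}{\|\psi\|^2}=\frac{\langle\psi,A\psi\rangle}{\|\psi\|^2}=:\langle A\rangle_\psi .$$
   Context: A metric operator is a bounded, strictly positive, self-adjoint operator with bounded inverse. The quantity $\langle A\rangle_{\psi,G}$ is defined when $G^{-1/2}\psi\in\mathcal{D}(A)$, and $\langle A\rangle_\psi$ when $\psi\in\mathcal{D}(A)$; the inner product is linear in the second argument. *)

(* Defs.v *)
From mathcomp Require Import all_boot all_order all_algebra.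
From mathcomp Require Import reals.
From mathcomp Require Export complex.
Set Implicit Arguments. Unset Strict Implicit. Unset Printing Implicit Defensive.
Import Order.TTheory GRing.Theory Num.Theory.
Local Open Scope ring_scope.
Local Open Scope complex_scope.

Section Hilbert.
Variable R : realType.
Variable H : lmodType R[i].
(* inner product, conjugate-linear in the first and linear in the second argument *)
Variable ip : H -> H -> R[i].

Definition inner_product_axioms : Prop :=
  [/\ (forall x y z (a : R[i]), ip x (a *: y + z) = a * ip x y + ip x z),
      (forall x y, ip y x = (ip x y)^*),
      (forall x, 0 <= ip x x) &
      (forall x, ip x x = 0 -> x = 0)].

Definition hnorm (x : H) : R := Num.sqrt (complex.Re (ip x x)).

Definition hcauchy (u : nat -> H) : Prop :=
  forall e : R, 0 < e -> exists N, forall m n, (N <= m)%N -> (N <= n)%N ->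
    hnorm (u m - u n) < e.

Definition hconverges (u : nat -> H) (l : H) : Prop :=
  forall e : R, 0 < e -> exists N, forall n, (N <= n)%N -> hnorm (u n - l) < e.

Definition hcomplete : Prop :=
  forall u, hcauchy u -> exists l, hconverges u l.

Definition hseparable : Prop :=
  exists u : nat -> H, forall x (e : R), 0 < e -> exists n, hnorm (x - u n) < e.

Definition separable_hilbert : Prop :=
  [/\ inner_product_axioms, hcomplete & hseparable].

Definition subspace (D : H -> Prop) : Prop :=
  D 0 /\ forall (a : R[i]) x y, D x -> D y -> D (a *: x + y).

Definition dense (D : H -> Prop) : Prop :=
  forall x (e : R), 0 < e -> exists y, D y /\ hnorm (x - y) < e.

Definition linear_on (D : H -> Prop) (A : H -> H) : Prop :=
  forall (a : R[i]) x y, D x -> D y -> A (a *: x + y) = a *: A x + A y.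

(* A with domain D is self-adjoint: densely defined, linear, and equal to its
   adjoint A^* (same domain, same action).  Here
   D(A^* ) = {y | exists z, forall x in D, <A x, y> = <x, z>}, A^* y = z. *)
Definition self_adjoint (D : H -> Prop) (A : H -> H) : Prop :=
  [/\ subspace D, dense D, linear_on D A,
      (forall y, D y <-> exists z, forall x, D x -> ip (A x) y = ip x z) &
      (forall x y, D x -> D y -> ip (A x) y = ip x (A y))].

Definition bounded (T : H -> H) : Prop :=
  exists M : R, forall x, hnorm (T x) <= M * hnorm x.

Definition bounded_self_adjoint (T : {linear H -> H}) : Prop :=
  bounded T /\ forall x y, ip (T x) y = ip x (T y).

Definition metric_operator (G : {linear H -> H}) : Prop :=
  [/\ bounded_self_adjoint G,
      (forall x, x != 0 -> 0 < ip x (G x)) &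
      exists Gi : {linear H -> H},
        [/\ bounded Gi, (forall x, G (Gi x) = x) & (forall x, Gi (G x) = x)]].

Definition is_sqrt_op (G S : {linear H -> H}) : Prop :=
  [/\ bounded_self_adjoint S, (forall x, 0 <= ip x (S x)) & (forall x, S (S x) = G x)].

Definition is_inverse_op (S Si : {linear H -> H}) : Prop :=
  (forall x, S (Si x) = x) /\ (forall x, Si (S x) = x).

End Hilbert.

(* Main.v *)
Require Import Defs.
From mathcomp Require Import all_boot all_order all_algebra.
From mathcomp Require Import reals complex.
From mathcomp Require Import ring lra.
Import Order.TTheory GRing.Theory Num.Theory.
Local Open Scope ring_scope.
Local Open Scope complex_scope.
Set Warnings "-notation-overridden -ambiguous-paths".
Set Implicit Arguments. Unset Strict Implicit. Unset Printing Implicit Defensive.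

Section Basic.
Variables (R : realType) (H : lmodType R[i]) (ip : H -> H -> R[i]).
Hypothesis ipA : inner_product_axioms ip.

Lemma ipDr x (a : R[i]) y z : ip x (a *: y + z) = a * ip x y + ip x z.
Proof. by move: ipA => [h _ _ _]; apply: h. Qed.
Lemma ipJ x y : ip y x = (conjc (ip x y)).
Proof. by move: ipA => [_ h _ _]; apply: h. Qed.
Lemma ip_ge0 x : 0 <= ip x x.
Proof. by move: ipA => [_ _ h _]; apply: h. Qed.
Lemma ip_eq0 x : ip x x = 0 -> x = 0.
Proof. by move: ipA => [_ _ _ h]; apply: h. Qed.

Lemma conjD (a b : R[i]) : (conjc (a + b)) = (conjc a) + (conjc b).
Proof. by case: a; case: b => ????; simpc; congr (_ +i* _); ring. Qed.
Lemma conjM (a b : R[i]) : (conjc (a * b)) = (conjc a) * (conjc b).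
Proof. by case: a; case: b => ????; simpc; congr (_ +i* _); ring. Qed.
Lemma conjN (a : R[i]) : (conjc (- a)) = - (conjc a).
Proof. by case: a => ??; simpc. Qed.
Lemma ipr0 x : ip x 0 = 0.
Proof.
have := ipDr x 1 0 0; rewrite scale1r addr0 mul1r => /eqP.
by rewrite -subr_eq0 opprD addrA subrr sub0r oppr_eq0 => /eqP.
Qed.
Lemma ipZr x a y : ip x (a *: y) = a * ip x y.
Proof. by rewrite -[a *: y]addr0 ipDr ipr0 addr0. Qed.
Lemma ipDr2 x y z : ip x (y + z) = ip x y + ip x z.
Proof. by rewrite -[y in LHS]scale1r ipDr mul1r. Qed.
Lemma ipNr x y : ip x (- y) = - ip x y.
Proof. by rewrite -scaleN1r ipZr mulN1r. Qed.
Lemma ipBr x y z : ip x (y - z) = ip x y - ip x z.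
Proof. by rewrite ipDr2 ipNr. Qed.
Lemma ipDl x y z : ip (x + y) z = ip x z + ip y z.
Proof. by rewrite ipJ ipDr2 conjD (ipJ z x) (ipJ z y). Qed.
Lemma ipZl a x y : ip (a *: x) y = (conjc a) * ip x y.
Proof. by rewrite ipJ ipZr conjM (ipJ y x). Qed.
Lemma ipNl x y : ip (- x) y = - ip x y.
Proof. by rewrite ipJ ipNr conjN (ipJ y x). Qed.
Lemma ipBl x y z : ip (x - y) z = ip x z - ip y z.
Proof. by rewrite ipDl ipNl. Qed.
Lemma ip0l y : ip 0 y = 0.
Proof. by rewrite ipJ ipr0 conjc0. Qed.

Definition nn x := complex.Re (ip x x).
Lemma nnE x : ip x x = (nn x)%:C.
Proof.
have := ip_ge0 x; rewrite /nn; case: (ip x x) => a b.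
by rewrite lecE /= => /andP[/eqP -> _].
Qed.
Lemma nn_ge0 x : 0 <= nn x.
Proof. by have := ip_ge0 x; rewrite nnE ler0c. Qed.
Lemma nn_eq0 x : nn x = 0 -> x = 0.
Proof. by move=> h; apply: ip_eq0; rewrite nnE h. Qed.
Lemma nn0 : nn 0 = 0.
Proof. by rewrite /nn ipr0. Qed.

Definition m2 (z : R[i]) := complex.Re z ^+ 2 + complex.Im z ^+ 2.
Lemma m2_ge0 z : 0 <= m2 z.
Proof. rewrite /m2; nra. Qed.
Lemma m2_le0 z : m2 z <= 0 -> z = 0.
Proof.
case: z => a b; rewrite /m2 /= => h.
have a0 : a ^+ 2 = 0 by apply/eqP; rewrite eq_le sqr_ge0 andbT; have := sqr_ge0 b; lra.
have b0 : b ^+ 2 = 0 by apply/eqP; rewrite eq_le sqr_ge0 andbT; have := sqr_ge0 a; lra.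
by move/eqP: a0; rewrite sqrf_eq0 => /eqP ->; move/eqP: b0; rewrite sqrf_eq0 => /eqP ->.
Qed.
Lemma mulJ z : z * (conjc z) = (m2 z)%:C.
Proof. by case: z => a b; rewrite /m2 /=; simpc; congr (_ +i* _); ring. Qed.

Lemma ReJ (z : R[i]) : complex.Re ((conjc z)) = complex.Re z.
Proof. by case: z. Qed.

Lemma nnD x y : nn (x + y) = nn x + nn y + 2 * complex.Re (ip x y).
Proof.
rewrite /nn ipDl !ipDr2 (ipJ y x) -/(nn x) -/(nn y) !raddfD /= ReJ; ring.
Qed.
Lemma nnN x : nn (- x) = nn x.
Proof. by rewrite /nn ipNl ipNr opprK. Qed.
Lemma nnB x y : nn (x - y) = nn x + nn y - 2 * complex.Re (ip x y).
Proof. by rewrite nnD nnN ipNr raddfN /=; ring. Qed.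
Lemma nnZ (a : R) x : nn (a%:C *: x) = a ^+ 2 * nn x.
Proof. rewrite /nn ipZl ipZr nnE /=; ring. Qed.
Lemma nnD2 x y : nn (x + y) <= 2 * nn x + 2 * nn y.
Proof. have := nn_ge0 (x - y); rewrite nnB nnD; nra. Qed.

Lemma CS x y : m2 (ip x y) <= nn x * nn y.
Proof.
have [/eqP x0|xn0] := boolP (nn x == 0).
  by rewrite (nn_eq0 x0) ip0l nn0 mul0r /m2 /= expr0n /=; lra.
pose v := ip x x *: y - ip x y *: x.
have hv : ip v v = (nn x * (nn x * nn y - m2 (ip x y)))%:C.
  rewrite /v !ipBl !ipBr !ipZl !ipZr !nnE (ipJ x y).
  move: (ip x y) => b; rewrite /m2; case: b => b1 b2 /=; simpc.
  congr (_ +i* _); ring.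
have := nn_ge0 v; rewrite /nn hv /= => h.
have hx : 0 < nn x by rewrite lt0r xn0 nn_ge0.
rewrite -subr_ge0; rewrite pmulr_rge0 // in h.
Qed.
End Basic.

Section Basic2.
Variables (R : realType) (H : lmodType R[i]) (ip : H -> H -> R[i]).
Hypothesis ipA : inner_product_axioms ip.
Local Notation nn := (@nn R H ip).

Lemma hnorm_sq x : hnorm ip x ^+ 2 = nn x.
Proof. by rewrite /hnorm sqr_sqrtr // nn_ge0. Qed.
Lemma hnorm_ge0 x : 0 <= hnorm ip x.
Proof. exact: sqrtr_ge0. Qed.

Lemma Re_le_m2 (z : R[i]) : complex.Re z ^+ 2 <= m2 z.
Proof. rewrite /m2; nra. Qed.

Lemma bounded_nn (T : H -> H) : bounded ip T ->
  exists M, 0 <= M /\ forall x, nn (T x) <= M * nn x.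
Proof.
move=> [M hM]; exists (M ^+ 2); split; first by rewrite sqr_ge0.
move=> x; rewrite -!hnorm_sq; have := hM x.
have := hnorm_ge0 (T x); have := hnorm_ge0 x; nra.
Qed.

Lemma dense_eq0 (E : H -> Prop) w : dense ip E -> (forall x, E x -> ip x w = 0) -> w = 0.
Proof.
move=> hd hE; apply: (nn_eq0 ipA); apply/eqP; apply: contraT => wn0.
have wp : 0 < nn w by rewrite lt0r wn0 nn_ge0.
have hp : 0 < hnorm ip w by rewrite /hnorm sqrtr_gt0.
have [y [Ey hy]] := hd w (hnorm ip w / 2) (divr_gt0 hp (ltr0Sn _ 1)).
have e1 : ip w w = ip (w - y) w by rewrite ipBl // (hE y Ey) subr0.
have := CS ipA (w - y) w; have := Re_le_m2 (ip (w - y) w).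
rewrite -e1 -/(nn w) -(hnorm_sq (w - y)) -(hnorm_sq w).
rewrite -(hnorm_sq w) in wp.
have := hnorm_ge0 (w - y); move: hy hp; set a := hnorm ip (w - y); set b := hnorm ip w.
move=> hy hp ha h1 h2.
have : b ^+ 2 ^+ 2 <= a ^+ 2 * b ^+ 2 by apply: le_trans h1 h2.
have : a ^+ 2 < (b / 2) ^+ 2 by rewrite ltr_pXn2r // ?nnegrE // divr_ge0 // ltW.
nra.
Qed.
End Basic2.

Lemma key_id (F : comNzRingType) (V : lmodType F) (u b d g : V) (K c : F) (hc : K * c = 1) :
  g - K *: ((u - b) - (b - d)) = (2 * K) *: b - K *: ((u - c *: g) + d).
Proof.
rewrite !scalerBr !scalerDr ?scalerBr scalerN scalerA hc scale1r mulr_natl mulr2n scalerDl.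
move: (K *: u) (K *: b) (K *: d) => U B D.
rewrite !opprD !opprK !addrA.
congr (_ - D).
by rewrite [RHS]addrC (addrC (B + B)) !addrA.
Qed.

Lemma bern (R : realType) (r : R) n : 0 <= r -> r <= 1 -> r ^+ n * (1 + n%:R * (1 - r)) <= 1.
Proof.
move=> r0 r1; elim: n => [|n IH]; first by rewrite expr0 mul0r addr0 mul1r.
rewrite exprS mulrS.
have := exprn_ge0 n r0; have := exprn_ile1 n r0 r1; have : 0 <= n%:R :> R by apply: ler0n.
move: IH; set p := r ^+ n; set m := n%:R => IH h1 h2 h3.
have t1 : 0 <= r * (1 - p * (1 + m * (1 - r))) by apply: mulr_ge0 => //; lra.
have t2 : 0 <= (1 - r) * (1 - r * p) by apply: mulr_ge0; nra.
nra.
Qed.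

Lemma geom_lim (R : realType) (a C r : R) : 0 <= r -> r < 1 -> (forall n, a <= C * r ^+ n) -> a <= 0.
Proof.
move=> r0 r1 h; rewrite leNgt; apply/negP => a0.
have C0 : a <= C by have := h 0%N; rewrite expr0 mulr1.
have ar : 0 < a * (1 - r) by apply: mulr_gt0 => //; rewrite subr_gt0.
have M0 : 0 <= C / (a * (1 - r)) by apply: divr_ge0; [apply: le_trans C0; apply: ltW | apply: ltW].
have := archi_boundP M0; set N := Num.Def.archi_bound _ => hN.
rewrite ltr_pdivrMr // in hN.
have := h N; have := bern N r0 (ltW r1); have := exprn_ge0 N r0; have : 0 <= N%:R :> R by apply: ler0n.
move: hN; set p := r ^+ N; set m := N%:R => hN m0 p0 hb ha.
have C0' : 0 <= C by apply: le_trans C0; apply: ltW.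
have t1 : 0 <= (C * p - a) * (1 + m * (1 - r)).
  by apply: mulr_ge0; [rewrite subr_ge0 | apply: addr_ge0 => //; apply: mulr_ge0 => //; rewrite subr_ge0 ltW].
have t2 : 0 <= C * (1 - p * (1 + m * (1 - r))) by apply: mulr_ge0 => //; rewrite subr_ge0.
nra.
Qed.

Section Main.
Variables (R : realType) (H : lmodType R[i]) (ip : H -> H -> R[i]).
Variables (D : H -> Prop) (A : H -> H) (G S Si : {linear H -> H}).
Hypothesis ipA : inner_product_axioms ip.
Hypothesis hA : self_adjoint ip D A.
Hypothesis hG : metric_operator ip G.
Hypothesis hS : is_sqrt_op ip G S.
Hypothesis hSi : is_inverse_op S Si.
Hypothesis hB : self_adjoint ip (fun x => D (Si x)) (fun x => S (A (Si x))).
Local Notation nn := (@nn R H ip).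
Local Notation ipDr := (ipDr ipA).
Local Notation ipJ := (ipJ ipA).
Local Notation ip_ge0 := (ip_ge0 ipA).
Local Notation ip_eq0 := (ip_eq0 ipA).
Local Notation ipr0 := (ipr0 ipA).
Local Notation ipZr := (ipZr ipA).
Local Notation ipDr2 := (ipDr2 ipA).
Local Notation ipNr := (ipNr ipA).
Local Notation ipBr := (ipBr ipA).
Local Notation ipDl := (ipDl ipA).
Local Notation ipZl := (ipZl ipA).
Local Notation ipNl := (ipNl ipA).
Local Notation ipBl := (ipBl ipA).
Local Notation ip0l := (ip0l ipA).
Local Notation nnE := (nnE ipA).
Local Notation nn_ge0 := (nn_ge0 ipA).
Local Notation nn_eq0 := (nn_eq0 ipA).
Local Notation nn0 := (nn0 ipA).
Local Notation CS := (CS ipA).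
Local Notation nnD := (nnD ipA).
Local Notation nnN := (nnN ipA).
Local Notation nnB := (nnB ipA).
Local Notation nnZ := (nnZ ipA).
Local Notation nnD2 := (nnD2 ipA).

Lemma D0 : D 0. Proof. by case: hA => [[]]. Qed.
Lemma DZD a x y : D x -> D y -> D (a *: x + y). Proof. by case: hA => [[_ h]] *; apply: h. Qed.
Lemma DD x y : D x -> D y -> D (x + y). Proof. by move=> *; rewrite -[x]scale1r; apply: DZD. Qed.
Lemma DZ a x : D x -> D (a *: x). Proof. by move=> *; rewrite -[_ *: _]addr0; apply: DZD => //; apply: D0. Qed.
Lemma DN x : D x -> D (- x). Proof. by move=> *; rewrite -scaleN1r; apply: DZ. Qed.
Lemma DB x y : D x -> D y -> D (x - y). Proof. by move=> *; apply: DD => //; apply: DN. Qed.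
Lemma Ddense : dense ip D. Proof. by case: hA. Qed.
Lemma AZD a x y : D x -> D y -> A (a *: x + y) = a *: A x + A y. Proof. by case: hA => _ _ h *; apply: h. Qed.
Lemma A0 : A 0 = 0.
Proof. have := AZD 1 D0 D0; rewrite scale1r addr0 scale1r.
 by move=> /(congr1 (fun v => v - A 0)); rewrite subrr addrK => /esym. Qed.
Lemma AD x y : D x -> D y -> A (x + y) = A x + A y. Proof. by move=> hx hy; rewrite -[x]scale1r AZD // ?scale1r //; apply: DZ. Qed.
Lemma AZ a x : D x -> A (a *: x) = a *: A x. Proof. by move=> hx; rewrite -[_ *: _]addr0 AZD ?A0 ?addr0 //; apply: D0. Qed.
Lemma AN x : D x -> A (- x) = - A x. Proof. by move=> hx; rewrite -scaleN1r AZ // scaleN1r. Qed.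
Lemma AB x y : D x -> D y -> A (x - y) = A x - A y. Proof. by move=> hx hy; rewrite AD ?AN //; apply: DN. Qed.
Lemma Adom y : D y <-> exists z, forall x, D x -> ip (A x) y = ip x z. Proof. by case: hA. Qed.
Lemma Asym x y : D x -> D y -> ip (A x) y = ip x (A y). Proof. by case: hA => _ _ _ _ h; apply: h. Qed.
Lemma Bdense : dense ip (fun x => D (Si x)). Proof. by case: hB. Qed.
Lemma Bdom y : D (Si y) <-> exists z, forall x, D (Si x) -> ip (S (A (Si x))) y = ip x z. Proof. by case: hB. Qed.
Lemma Bsym x y : D (Si x) -> D (Si y) -> ip (S (A (Si x))) y = ip x (S (A (Si y))). Proof. by case: hB => _ _ _ _ h; apply: h. Qed.
Lemma Ssym x y : ip (S x) y = ip x (S y). Proof. by case: hS => [[_ h]]. Qed.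
Lemma Spos x : 0 <= ip x (S x). Proof. by case: hS. Qed.
Lemma SSG x : S (S x) = G x. Proof. by case: hS. Qed.
Lemma Sbnd : bounded ip S. Proof. by case: hS => [[]]. Qed.
Lemma SSi x : S (Si x) = x. Proof. by case: hSi. Qed.
Lemma SiS x : Si (S x) = x. Proof. by case: hSi. Qed.
Lemma Sisym x y : ip (Si x) y = ip x (Si y).
Proof. by rewrite -{1}(SSi y) -Ssym SSi. Qed.
Lemma Gsym x y : ip (G x) y = ip x (G y).
Proof. by rewrite -!SSG !Ssym. Qed.
Lemma GS x : G (S x) = S (G x). Proof. by rewrite -!SSG. Qed.

Lemma Sibnd : bounded ip Si.
Proof.
case: hG => _ _ [Gi [[M hM] h1 h2]].
have e x : Si x = S (Gi x).
  by rewrite -{1}(h1 x) -SSG SiS.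
have [MS hMS] := Sbnd.
exists (Num.max MS 0 * M) => x; rewrite e.
apply: (le_trans (hMS _)).
have m0 : 0 <= Num.max MS 0 by rewrite le_max lexx orbT.
have m1 : MS <= Num.max MS 0 by rewrite le_max lexx.
have h3 := hM x; have h4 := hnorm_ge0 ip (Gi x); have h5 := hnorm_ge0 ip x.
move: m0 m1 h3 h4 h5; set m := Num.max MS 0; set a := hnorm ip (Gi x); set b := hnorm ip x.
move=> *; nra.
Qed.

Lemma E1 y : D (S y) -> D (Si y).
Proof.
move=> hy; apply/Bdom; exists (Si (A (S y))) => x hx.
by rewrite Ssym Asym // Sisym.
Qed.

Lemma E2 y : D (Si y) -> D (S y).
Proof.
move=> /Bdom [z hz]; apply/Adom; exists (S z) => v hv.
by rewrite -(Ssym v z) -hz ?SiS // Ssym.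
Qed.

Lemma E3 y : D (S y) -> S (A (Si y)) = Si (A (S y)).
Proof.
move=> hy; have hy' := E1 hy.
apply/eqP; rewrite -subr_eq0; apply/eqP.
apply: (dense_eq0 ipA Bdense) => x hx.
by rewrite ipBr // -Bsym // Ssym Asym // Sisym subrr.
Qed.

Lemma GD u : D u -> D (G u).
Proof. by move=> hu; rewrite -SSG; apply: E2; rewrite SiS. Qed.

Lemma GA u : D u -> A (G u) = G (A u).
Proof.
move=> hu; have h : D (S (S u)) by rewrite SSG; apply: GD.
have := E3 h; rewrite SiS => e.
by rewrite -SSG -[in RHS]SSG e SSi.
Qed.

Lemma subDD (a b c : H) : (a + b) - (a + c) = b - c.
Proof. by rewrite opprD addrACA subrr add0r. Qed.
Lemma subDD2 (a b c : H) : (a + b) - (b + c) = a - c.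
Proof. by rewrite opprD addrA addrK. Qed.

Definition lin (f : H -> H) := forall a x y, f (a *: x + y) = a *: f x + f y.
Section LinF.
Variable f : H -> H.
Hypothesis hf : lin f.
Lemma lin0 : f 0 = 0.
Proof. have := hf 1 0 0; rewrite scale1r addr0 scale1r.
 by move=> /(congr1 (fun v => v - f 0)); rewrite subrr addrK => /esym. Qed.
Lemma linD x y : f (x + y) = f x + f y. Proof. by rewrite -[x]scale1r hf !scale1r. Qed.
Lemma linZ a x : f (a *: x) = a *: f x. Proof. by rewrite -[_ *: _]addr0 hf lin0 !addr0. Qed.
Lemma linN x : f (- x) = - f x. Proof. by rewrite -scaleN1r linZ scaleN1r. Qed.
Lemma linB x y : f (x - y) = f x - f y. Proof. by rewrite linD linN. Qed.
End LinF.

Lemma linL (L : {linear H -> H}) : lin L.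
Proof. by move=> a x y; rewrite linearD linearZ. Qed.

Section Iter.
Variable k : R.
Hypothesis hk : 1 <= k.
Variable q2 : R.
Hypothesis hq0 : 0 <= q2.
Hypothesis hq1 : q2 < 1.

Definition T x := x - (k ^- 2)%:C *: G x.
Hypothesis hT : forall x, nn (T x) <= q2 * nn x.

Lemma linT : lin T.
Proof.
move=> a x y; rewrite /T (linD (linL G)) (linZ (linL G)) scalerDr scalerBr !scalerA (mulrC a).
by rewrite opprD addrACA.
Qed.

Lemma conjR (a : R) : (conjc (a%:C)) = a%:C.
Proof. by rewrite /conjc /= oppr0. Qed.

Lemma TS x : S (T x) = T (S x).
Proof. by rewrite /T (linB (linL S)) (linZ (linL S)) GS. Qed.

Lemma TD x : D x -> D (T x) /\ A (T x) = T (A x).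
Proof.
move=> hx; have hg := GD hx; split; first by apply: DB => //; apply: DZ.
by rewrite /T AB ?AZ ?GA //; apply: DZ.
Qed.

Lemma Tsym x y : ip (T x) y = ip x (T y).
Proof. by rewrite /T ipBl ipBr ipZl ipZr conjR Gsym. Qed.

Fixpoint Y n x := if n is n'.+1 then (2^-1 : R)%:C *: (T x + Y n' (Y n' x)) else 0.

Lemma linY n : lin (Y n).
Proof.
elim: n => [|n IH] a x y /=; first by rewrite scaler0 addr0.
rewrite linT IH IH !scalerDr !scalerA !(mulrC a).
by rewrite addrACA.
Qed.

Lemma commY (X : H -> H) : lin X -> (forall x, X (T x) = T (X x)) ->
  forall n x, X (Y n x) = Y n (X x).
Proof.
move=> hX hXT; elim=> [|n IH] x /=; first exact: lin0.
by rewrite (linZ hX) (linD hX) hXT !IH.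
Qed.

Lemma YT n x : Y n (T x) = T (Y n x).
Proof. by rewrite (commY linT). Qed.

Lemma YY n m x : Y n (Y m x) = Y m (Y n x).
Proof. by rewrite (commY (linY n) (YT n)). Qed.

Lemma YS n x : S (Y n x) = Y n (S x).
Proof. by rewrite (commY (linL S) TS). Qed.

Lemma Ysym n x y : ip (Y n x) y = ip x (Y n y).
Proof.
elim: n x y => [|n IH] x y /=; first by rewrite ip0l ?ipr0.
by rewrite ipZl ipZr conjR ipDl ipDr2 IH IH Tsym.
Qed.

Lemma YD n x : D x -> D (Y n x) /\ A (Y n x) = Y n (A x).
Proof.
elim: n x => [|n IH] x hx /=; first by split; [apply: D0 | apply: A0].
have [t1 t2] := TD hx; have [y1 y2] := IH _ hx; have [z1 z2] := IH _ y1.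
split; first by apply: DZ; apply: DD.
by rewrite (AZ _ (DD t1 z1)) (AD t1 z1) t2 z2 y2.
Qed.

Definition r := (1 + q2) / 2.
Lemma r_ge0 : 0 <= r. Proof. rewrite /r; have := hq0; lra. Qed.
Lemma r_lt1 : r < 1. Proof. rewrite /r; have := hq1; lra. Qed.

Lemma Ybnd n x : nn (Y n x) <= r * nn x.
Proof.
elim: n x => [|n IH] x /=; first by rewrite nn0 mulr_ge0 ?r_ge0 ?nn_ge0.
rewrite nnZ; apply: le_trans (ler_wpM2l (sqr_ge0 _) (nnD2 _ _)) _.
have h1 := hT x; have h2 := IH (Y n x); have h3 := IH x.
have h0 := nn_ge0 x; have h4 := nn_ge0 (Y n x); have := hq0; have := hq1.
move: h1 h2 h3 h0 h4; rewrite /r.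
set a := nn (T x); set b := nn (Y n (Y n x)); set c := nn (Y n x); set d := nn x.
move=> h1 h2 h3 h0 h4 hq1' hq0'.
have e : (2^-1 : R) ^+ 2 = 4^-1 by rewrite expr2 -invfM; congr (_^-1); lra.
rewrite e.
have : b <= (1 + q2) / 2 * ((1 + q2) / 2 * d).
  by apply: le_trans h2 _; apply: ler_wpM2l => //; lra.
nra.
Qed.

Lemma Ydiff n x : nn (Y n.+1 x - Y n x) <= r ^+ n * nn x.
Proof.
have e : (2^-1 : R) ^+ 2 = 4^-1 by rewrite expr2 -invfM; congr (_^-1); lra.
elim: n x => [|n IH] x.
  rewrite /= !subr0 addr0 nnZ e expr0 mul1r.
  have := hT x; have := nn_ge0 x; have := nn_ge0 (T x); have := hq0; have := hq1; nra.
have -> : Y n.+2 x - Y n.+1 x =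
   (2^-1 : R)%:C *: (Y n.+1 (Y n.+1 x + Y n x) - Y n (Y n.+1 x + Y n x)).
  have -> : Y n.+2 x - Y n.+1 x = (2^-1 : R)%:C *:
     ((T x + Y n.+1 (Y n.+1 x)) - (T x + Y n (Y n x))) by rewrite scalerBr.
  congr (_ *: _).
  by rewrite subDD (linD (linY n.+1)) (linD (linY n)) (YY n n.+1) subDD2.
rewrite nnZ e; apply: le_trans (ler_wpM2l _ (IH _)) _; first lra.
have := nnD2 (Y n.+1 x) (Y n x); have := Ybnd n.+1 x; have := Ybnd n x.
have := nn_ge0 x; have := r_ge0; have := exprn_ge0 n r_ge0.
rewrite exprS; set a := r ^+ n; move=> *; nra.
Qed.

Definition P n x := k%:C *: (x - Y n x).

Lemma PS n x : S (P n x) = P n (S x).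
Proof. by rewrite /P (linZ (linL S)) (linB (linL S)) YS. Qed.

Lemma PD n x : D x -> D (P n x) /\ A (P n x) = P n (A x).
Proof.
move=> hx; have [y1 y2] := YD n hx.
split; first by apply: DZ; apply: DB.
by rewrite /P AZ ?AB ?y2 //; apply: DB.
Qed.

Lemma Psym n x y : ip (P n x) y = ip x (P n y).
Proof. by rewrite /P ipZl ipZr conjR ipBl ipBr Ysym. Qed.

Lemma ReCM (a : R) (z : R[i]) : complex.Re (a%:C * z) = a * complex.Re z.
Proof. by case: z => ?? /=; ring. Qed.

Lemma Ppos n w : k * (1 - r) / 2 * nn w <= complex.Re (ip w (P n w)).
Proof.
rewrite /P ipZr ipBr ReCM raddfB /= -/(nn w).
have := nn_ge0 (w - Y n w); rewrite nnB.
have := Ybnd n w; have := nn_ge0 w; have := r_ge0; have := r_lt1; have := hk.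
set a := complex.Re (ip w (Y n w)); set b := nn (Y n w); set c := nn w.
move=> *; nra.
Qed.

Lemma PP n u : S (S u) - P n (P n u) = (2 * k ^+ 2 : R)%:C *: (Y n u - Y n.+1 u).
Proof.
rewrite SSG /P (linZ (linY n)) (linB (linY n)) -scalerBr scalerA.
have k0 : k != 0.
  by apply: lt0r_neq0; apply: lt_le_trans hk; apply: ltr01.
have hc : k%:C * k%:C * (k ^- 2)%:C = 1.
  by simpc; congr (_ +i* _); field.
rewrite (key_id _ _ _ _ hc) [Y n.+1 u]/= scalerBr scalerA -/(T u).
congr (_ *: _ - _ *: _); simpc; rewrite /real_complex_def; congr (_ +i* _); by field.
Qed.

Lemma PB n x y : P n (x - y) = P n x - P n y.
Proof.
rewrite /P (linB (linY n)) -scalerBr; congr (_ *: _).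
by rewrite !opprD !opprK !addrA (addrAC x).
Qed.

Lemma Re_ge0 (z : R[i]) : 0 <= z -> 0 <= complex.Re z.
Proof. by case: z => a b; rewrite lecE /= => /andP[]. Qed.

Lemma nnBC x y : nn (x - y) = nn (y - x).
Proof. by rewrite -nnN opprB. Qed.

Lemma Sconv n u : (k * (1 - r) / 2) ^+ 2 * nn (S u - P n u) <= 4 * k ^+ 4 * r ^+ n * nn u.
Proof.
set w := S u - P n u; set b := k * (1 - r) / 2.
have ev : S w + P n w = (2 * k ^+ 2 : R)%:C *: (Y n u - Y n.+1 u).
  rewrite -PP /w (linB (linL S)) PB PS -!addrA; congr (_ + _).
  by rewrite addrA addNr add0r.
have hv : nn (S w + P n w) <= 4 * k ^+ 4 * r ^+ n * nn u.
  rewrite ev nnZ nnBC; have := Ydiff n u; have := exprn_ge0 n r_ge0.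
  have := nn_ge0 (Y n.+1 u - Y n u).
  set d := nn (Y n.+1 u - Y n u); move=> d0 rn0 hd.
  have -> : (2 * k ^+ 2) ^+ 2 = 4 * k ^+ 4 by ring.
  rewrite -[4 * k ^+ 4 * r ^+ n * nn u]mulrA; apply: ler_wpM2l => //.
  by rewrite mulr_ge0 // exprn_ge0 //; apply: le_trans hk; apply: ler01.
have hl : b * nn w <= complex.Re (ip w (S w + P n w)).
  rewrite ipDr2 raddfD /=; have := Ppos n w; have := Re_ge0 (Spos w).
  rewrite -/b; lra.
have hb : 0 <= b.
  rewrite /b; have := r_lt1; have := hk; move=> *.
  apply: divr_ge0 => //; apply: mulr_ge0; lra.
have := CS (w) (S w + P n w); have := Re_le_m2 (ip w (S w + P n w)).
have := nn_ge0 w; have := nn_ge0 (S w + P n w).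
move: hl hv hb; set c := complex.Re _; set e := m2 _; set f := nn (S w + P n w).
set g := nn w; set h := 4 * _ * _ * _ => hl hv hb f0 g0 h1 h2.
have : b * g * (b * g) <= g * f.
  apply: le_trans h2; apply: le_trans h1; rewrite expr2.
  by apply: ler_pM => //; apply: mulr_ge0.
have [g00|gp] := eqVneq g 0.
  move=> _; rewrite g00 mulr0 /h.
  have k0 : 0 <= k by apply: le_trans hk; apply: ler01.
  by rewrite !mulr_ge0 // ?exprn_ge0 // ?r_ge0 // nn_ge0.
have gpos : 0 < g by rewrite lt0r gp g0.
move=> hh; have : b ^+ 2 * g <= f.
  rewrite -(ler_pM2l gpos); move: hh; rewrite expr2; nra.
move=> hbf; apply: le_trans hbf hv.
Qed.

Lemma m2B (a b : R[i]) : m2 (a - b) <= 2 * m2 a + 2 * m2 b.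
Proof.
case: a => a1 a2; case: b => b1 b2; rewrite /m2 /=.
have := sqr_ge0 (a1 + b1); have := sqr_ge0 (a2 + b2); nra.
Qed.

Lemma Fbound n x u : D x -> D u ->
  (k * (1 - r) / 2) ^+ 2 * m2 (ip (A x) (S u) - ip (S x) (A u)) <=
  8 * k ^+ 4 * (nn (A x) * nn u + nn x * nn (A u)) * r ^+ n.
Proof.
move=> hx hu; have [px pax] := PD n hx.
have e : ip (A x) (S u) - ip (S x) (A u) =
   ip (A x) (S u - P n u) - ip (S x - P n x) (A u).
  rewrite ipBr ipBl -(Psym n (A x) u) -pax (Asym px hu).
  by rewrite opprB addrA subrK.
rewrite e; set a := ip (A x) _; set b := ip _ (A u).
have ha := CS (A x) (S u - P n u); have hb := CS (S x - P n x) (A u).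
have hu' := Sconv n u; have hx' := Sconv n x.
have hab := m2B a b.
set B := (k * (1 - r) / 2) ^+ 2.
have B0 : 0 <= B by apply: sqr_ge0.
have := nn_ge0 (A x); have := nn_ge0 (A u); have := nn_ge0 (S u - P n u); have := nn_ge0 (S x - P n x).
move: ha hb hu' hx' hab; rewrite -/a -/b -/B.
set wu := nn (S u - P n u); set wx := nn (S x - P n x); set ax := nn (A x); set au := nn (A u).
set K4 := 4 * k ^+ 4 * r ^+ n.
move=> ha hb hu' hx' hab h1 h2 h3 h4.
have e1 : B * m2 (a - b) <= 2 * (ax * (B * wu)) + 2 * ((B * wx) * au).
  have := ler_wpM2l B0 hab; have := ler_wpM2l B0 ha; have := ler_wpM2l B0 hb; nra.
apply: le_trans e1 _.
have t1 : ax * (B * wu) <= ax * (K4 * nn u) by apply: ler_wpM2l.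
have t2 : (B * wx) * au <= (K4 * nn x) * au by apply: ler_wpM2r.
have -> : 8 * k ^+ 4 * (ax * nn u + nn x * au) * r ^+ n =
   2 * (ax * (K4 * nn u)) + 2 * ((K4 * nn x) * au) by rewrite /K4; ring.
lra.
Qed.
End Iter.

Lemma Fzero x u : D x -> D u -> ip (A x) (S u) = ip (S x) (A u).
Proof.
move=> hx hu.
have [MS [MS0 hMS]] := bounded_nn ipA Sbnd.
have [MI [MI0 hMI]] := bounded_nn ipA Sibnd.
set k := MS + 1.
have hk : 1 <= k by rewrite /k lerDr.
have k0 : 0 < k by apply: lt_le_trans hk; apply: ltr01.
set c := k ^- 2.
have c0 : 0 < c by rewrite /c invr_gt0 exprn_gt0.
have cMS : c * MS <= 1.
  rewrite /c mulrC ler_pdivrMr ?exprn_gt0 // mul1r expr2 /k; nra.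
have c1 : c <= 1.
  by rewrite /c invf_le1 ?exprn_gt0 // expr2; nra.
set m := MI + 1.
have m1 : 1 <= m by rewrite /m lerDr.
have m0 : 0 < m by apply: lt_le_trans m1; apply: ltr01.
set q2 := 1 - c / m.
have hq0 : 0 <= q2.
  rewrite /q2 subr_ge0 ler_pdivrMr // mul1r; apply: le_trans c1 m1.
have hq1 : q2 < 1 by rewrite /q2 ltrBlDr ltrDl divr_gt0.
have hT : forall y, nn (T k y) <= q2 * nn y.
  move=> y; rewrite /T nnB nnZ ipZr ReCM.
  have -> : ip y (G y) = ip (S y) (S y) by rewrite -SSG Ssym.
  rewrite -/(nn (S y)) -/c.
  have h1 : nn (G y) <= MS * nn (S y) by rewrite -SSG; apply: hMS.
  have h2 : nn y <= m * nn (S y).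
    rewrite -{1}(SiS y); apply: le_trans (hMI _) _; apply: ler_wpM2r; [exact: nn_ge0|].
    by rewrite /m lerDl.
  have s0 := nn_ge0 (S y); have y0 := nn_ge0 y.
  have e : q2 * nn y = nn y - c * (nn y / m) by rewrite /q2; field; apply: lt0r_neq0.
  have h3 : nn y / m <= nn (S y) by rewrite ler_pdivrMr // mulrC.
  rewrite e; move: h1 h3; set s := nn (S y); set g := nn (G y); set t := nn y / m; move=> h1 h3.
  have : c ^+ 2 * g <= c ^+ 2 * (MS * s) by apply: ler_wpM2l => //; apply: sqr_ge0.
  have t1 : 0 <= c * s * (1 - c * MS) by apply: mulr_ge0; [apply: mulr_ge0 => //; apply: ltW | rewrite subr_ge0].
  have t2 : 0 <= c * (s - t) by apply: mulr_ge0; [apply: ltW | rewrite subr_ge0].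
  nra.
have B0 : 0 < (k * (1 - r q2) / 2) ^+ 2.
  apply: exprn_gt0; apply: divr_gt0; last exact: ltr0Sn.
  by apply: mulr_gt0 => //; rewrite subr_gt0 r_lt1.
set f := ip (A x) (S u) - ip (S x) (A u).
have hf : (k * (1 - r q2) / 2) ^+ 2 * m2 f <= 0.
  apply: (geom_lim (r_ge0 hq0) (r_lt1 hq1)) => n.
  exact: (Fbound hk hq0 hq1 hT n hx hu).
have : m2 f <= 0 by rewrite -(pmulr_rle0 _ B0).
move=> /m2_le0 f0; apply/eqP; rewrite -subr_eq0; apply/eqP; exact: f0.
Qed.

Lemma Scomm u : D u -> D (S u) /\ A (S u) = S (A u).
Proof.
move=> hu; have hSu : D (S u).
  by apply/Adom; exists (S (A u)) => x hx; rewrite Fzero // Ssym.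
split => //; apply/eqP; rewrite -subr_eq0; apply/eqP.
apply: (dense_eq0 ipA Ddense) => x hx.
by rewrite ipBr -(Asym hx hSu) Fzero // Ssym subrr.
Qed.

Lemma main_res psi : (D (Si psi) <-> D psi) /\
  (D (Si psi) -> D psi -> ip psi (S (A (Si psi))) = ip psi (A psi)).
Proof.
split; first split => h.
- by rewrite -(SSi psi); exact: (Scomm h).1.
- by apply: E1; exact: (Scomm h).1.
- by move=> h _; rewrite -(Scomm h).2 SSi.
Qed.
End Main.

Theorem proposition3p3 (R : realType) (H : lmodType R[i]) (ip : H -> H -> R[i])
    (D : H -> Prop) (A : H -> H) (G S Si : {linear H -> H}) :
  separable_hilbert ip ->
  self_adjoint ip D A ->
  metric_operator ip G ->
  is_sqrt_op ip G S ->
  is_inverse_op S Si ->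
  self_adjoint ip (fun x => D (Si x)) (fun x => S (A (Si x))) ->
  forall psi : H, psi != 0 ->
    (D (Si psi) <-> D psi) /\
    (D (Si psi) -> D psi ->
       ip psi (S (A (Si psi))) / ((hnorm ip psi) ^+ 2)%:C
       = ip psi (A psi) / ((hnorm ip psi) ^+ 2)%:C).
Proof.
move=> [ipA _ _] hA hG hS hSi hB psi _.
have [h1 h2] := main_res ipA hA hG hS hSi hB psi.
by split => // h3 h4; rewrite h2.
Qed.
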